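(* Let $T$ be a tree with $m$ edges, with the notation $T_A, T_B, t_1,\ldots,t_{a+b}, T(1),\ldots,T(a+b)$ fixed as in the context. Let $G$ be a bipartite graph on vertex classes $A$ and $B$. If $G$ admits a $T$-equitable edge-colouring, then $G$ has a $T^*$-decomposition.
   Context: All graphs are finite and loopless but may have multiple edges. Let $T$ be a tree with $m$ edges and let $T_A$, $T_B$ be the two vertex classes of a proper $2$-colouring of $T$, chosen so that $T_B$ contains a leaf of $T$. Denote the non-leaves of $T$ in $T_A$ by $t_1,\ldots,t_a$ and the non-leaves in $T_B$ by $t_{a+1},\ldots,t_{a+b}$. Colour the edges of $T$ with colours $1,\ldots,m$ so that distinct edges get distinct colours, and for $i\in\{1,\ldots,a+b\}$ let $T(i)$ be the set of colours of edges incident with $t_i$. For an edge-colouring of $G$ and a vertex $v$, $d_j(v)$ is the number of edges of colour $j$ at $v$. An edge-colouring of a bipartite graph $G$ with classes $A,B$ using colours $1,\ldots,m$ is $T$-equitable if (i) for every $v\in A$, $i\in\{1,\ldots,a\}$ and $j,k\in T(i)$ we have $d_j(v)=d_k(v)$, and (ii) for every $v\in B$, $i\in\{a+1,\ldots,a+b\}$ and $j,k\in T(i)$ we have $d_j(v)=d_k(v)$. A homomorphic copy of $T$ is a graph obtained from $T$ by identifying some vertices and keeping all edges; a $T^*$-decomposition of $G$ is a partition of $E(G)$ into subgraphs that are homomorphic copies of $T$. *)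

(* Defs.v *)
From mathcomp Require Import all_boot.
Set Implicit Arguments. Unset Strict Implicit. Unset Printing Implicit Defensive.

(* A bipartite (multi)graph with classes VA, VB and edge set E is given by two
   endpoint maps ea : E -> VA and eb : E -> VB (edge e joins ea e and eb e).
   The tree T has vertex classes TA, TB, and its edge set is 'I_m; the
   (bijective) colouring of the edges of T by the m colours is the identity
   (colours 1..m are represented by 'I_m, i.e. 0..m-1). *)

Section Defs.
Variables (VA VB E : finType) (ea : E -> VA) (eb : E -> VB).

Definition badj (D : {set E}) : rel (VA + VB) :=
  fun x y => [exists e in D,
     ((x == inl (ea e)) && (y == inr (eb e))) ||
     ((y == inl (ea e)) && (x == inr (eb e)))].

Definition bconnected : Prop :=
  forall x y : VA + VB, connect (badj [set: E]) x y.

Definition bacyclic : Prop :=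
  forall e : E, ~~ connect (badj (setT :\ e)) (inl (ea e)) (inr (eb e)).

Definition is_tree : Prop := bconnected /\ bacyclic.

Definition bdeg (x : VA + VB) : nat :=
  #|[set e : E | (x == inl (ea e)) || (x == inr (eb e))]|.

Definition is_leaf (x : VA + VB) : bool := bdeg x == 1.
End Defs.

Definition dcolA (VA E : finType) (ea : E -> VA) (m : nat)
  (col : E -> 'I_m) (v : VA) (j : 'I_m) : nat :=
  #|[set e : E | (ea e == v) && (col e == j)]|.
Definition dcolB (VB E : finType) (eb : E -> VB) (m : nat)
  (col : E -> 'I_m) (v : VB) (j : 'I_m) : nat :=
  #|[set e : E | (eb e == v) && (col e == j)]|.

(* T-equitable edge-colouring; T(i) for a non-leaf t_i is the set of colours
   (= edges) incident with t_i. *)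
Definition T_equitable (TA TB : finType) (m : nat) (ta : 'I_m -> TA)
  (tb : 'I_m -> TB) (VA VB E : finType) (ea : E -> VA) (eb : E -> VB)
  (col : E -> 'I_m) : Prop :=
  (forall (v : VA) (t : TA), ~~ is_leaf ta tb (inl t) ->
     forall j k : 'I_m, ta j = t -> ta k = t ->
       dcolA ea col v j = dcolA ea col v k) /\
  (forall (v : VB) (t : TB), ~~ is_leaf ta tb (inr t) ->
     forall j k : 'I_m, tb j = t -> tb k = t ->
       dcolB eb col v j = dcolB eb col v k).

Definition hom_copy (TA TB : finType) (m : nat) (ta : 'I_m -> TA)
  (tb : 'I_m -> TB) (VA VB E : finType) (ea : E -> VA) (eb : E -> VB)
  (S : {set E}) : Prop :=
  exists (phi : 'I_m -> E) (f : TA + TB -> VA + VB),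
    [/\ injective phi, [set phi i | i : 'I_m] = S &
      forall i : 'I_m,
        (f (inl (ta i)) = inl (ea (phi i)) /\ f (inr (tb i)) = inr (eb (phi i)))
     \/ (f (inl (ta i)) = inr (eb (phi i)) /\ f (inr (tb i)) = inl (ea (phi i)))].

Definition Tstar_decomposition (TA TB : finType) (m : nat) (ta : 'I_m -> TA)
  (tb : 'I_m -> TB) (VA VB E : finType) (ea : E -> VA) (eb : E -> VB) : Prop :=
  exists P : {set {set E}}, partition P [set: E] /\
    forall S, S \in P -> hom_copy ta tb ea eb S.

(* Main.v *)
Require Import Defs.
From mathcomp Require Import all_boot.
Set Implicit Arguments. Unset Strict Implicit. Unset Printing Implicit Defensive.

Section Proof.
Variables (TA TB : finType) (m : nat) (ta : 'I_m -> TA) (tb : 'I_m -> TB).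
Variables (VA VB E : finType) (ea : E -> VA) (eb : E -> VB) (col : E -> 'I_m).
Hypothesis hT : is_tree ta tb.
Hypothesis hcol : T_equitable ta tb ea eb col.

Definition tend (b : bool) (c : 'I_m) : TA + TB := if b then inl (ta c) else inr (tb c).
Definition gv (b : bool) (e : E) : VA + VB := if b then inl (ea e) else inr (eb e).
Definition Sc b v (j : 'I_m) : {set E} := [set e | (gv b e == v) && (col e == j)].
Definition lab b e := index e (enum (Sc b (gv b e) (col e))).
Definition st b e := (gv b e, lab b e, tend b (col e)).
Definition R : rel E := fun e e' => (st true e == st true e') || (st false e == st false e').

Lemma tend_inj b b' c c' : tend b c = tend b' c' -> b = b'.
Proof. by case: b; case: b'. Qed.

Lemma st_tend b e e' : st b e = st b e' -> tend b (col e) = tend b (col e').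
Proof. by move=> h; have := congr1 (fun x => x.2) h. Qed.

Lemma F1 b e e' : st b e = st b e' -> col e = col e' -> e = e'.
Proof.
case=> hg hl _ hc.
have hS : Sc b (gv b e) (col e) = Sc b (gv b e') (col e') by rewrite hg hc.
have ie : e \in enum (Sc b (gv b e) (col e)) by rewrite mem_enum inE !eqxx.
have ie' : e' \in enum (Sc b (gv b e) (col e)) by rewrite mem_enum inE hg hc !eqxx.
have hl' : index e (enum (Sc b (gv b e) (col e))) = index e' (enum (Sc b (gv b e) (col e))).
  by move: hl; rewrite /lab -hS.
by rewrite -[LHS](nth_index e ie) hl' nth_index.
Qed.

Lemma nonleaf b j k : j != k -> tend b j = tend b k -> ~~ is_leaf ta tb (tend b j).
Proof.
move=> njk hjk; rewrite /is_leaf /bdeg; apply/negP => /eqP h1.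
have : #|[set j; k]| <= 1.
  rewrite -h1; apply: subset_leq_card; apply/subsetP => x; rewrite !inE.
  by case/orP => /eqP ->; [|rewrite hjk]; case: (b) => /=; rewrite eqxx ?orbT.
by rewrite cards2 njk.
Qed.

Lemma cnt b e j k : tend b j = tend b k -> #|Sc b (gv b e) j| = #|Sc b (gv b e) k|.
Proof.
move=> hjk; have [->|njk] := eqVneq j k; first by [].
have nl := nonleaf njk hjk.
case: hcol => hA hB; move: hjk nl; case: b => /= hjk nl.
- have := hA (ea e) (ta j) nl j k erefl (esym (congr1 (fun x => if x is inl y then y else ta j) hjk)).
  rewrite /dcolA => h.
  have ->: Sc true (gv true e) j = [set e0 | (ea e0 == ea e) && (col e0 == j)] by apply/setP => x; rewrite !inE.
  have ->: Sc true (gv true e) k = [set e0 | (ea e0 == ea e) && (col e0 == k)] by apply/setP => x; rewrite !inE.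
  exact: h.
- have := hB (eb e) (tb j) nl j k erefl (esym (congr1 (fun x => if x is inr y then y else tb j) hjk)).
  rewrite /dcolB => h.
  have ->: Sc false (gv false e) j = [set e0 | (eb e0 == eb e) && (col e0 == j)] by apply/setP => x; rewrite !inE.
  have ->: Sc false (gv false e) k = [set e0 | (eb e0 == eb e) && (col e0 == k)] by apply/setP => x; rewrite !inE.
  exact: h.
Qed.

Lemma partner b e k : tend b k = tend b (col e) -> exists e', st b e' = st b e /\ col e' = k.
Proof.
move=> hk.
set S := Sc b (gv b e) (col e); set S' := Sc b (gv b e) k.
have ie : e \in enum S by rewrite mem_enum inE !eqxx.
have hl : lab b e < size (enum S') by rewrite -cardE (cnt e hk) cardE index_mem.
exists (nth e (enum S') (lab b e)).
have := mem_nth e hl; rewrite mem_enum inE => /andP[/eqP hg /eqP hc].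
split=> //; rewrite /st hg hc hk; congr (_, _, _).
by rewrite /lab hg hc index_uniq // enum_uniq.
Qed.


Definition Tadj (D : {set 'I_m}) := badj ta tb D.

Lemma Tadj_sym (D : {set 'I_m}) : symmetric (Tadj D).
Proof.
move=> x y; rewrite /Tadj /badj.
apply/existsP/existsP => -[i hi]; exists i; by rewrite orbC.
Qed.

Lemma ends (D : {set 'I_m}) (c : 'I_m) (b b' : bool) : c \in D -> connect (Tadj D) (tend b c) (tend b' c).
Proof.
move=> hc; case: b; case: b' => //=; apply: connect1; apply/existsP; exists c;
  by rewrite hc /= !eqxx ?orbT.
Qed.

Lemma acyc c b : ~~ connect (Tadj (setT :\ c)) (tend b c) (tend (~~ b) c).
Proof.
case: hT => _ hac; case: b => /=; first exact: hac.
by rewrite (sym_connect_sym (@Tadj_sym _)); exact: hac.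
Qed.

Definition stp (f : nat -> E) i := st true (f i) == st true (f i.+1).

Lemma step f i : R (f i) (f i.+1) -> st (stp f i) (f i) = st (stp f i) (f i.+1).
Proof. by rewrite /stp /R; case: eqP => //= _ /eqP. Qed.

Lemma chain (D : {set 'I_m}) n f : (forall i, i < n -> R (f i) (f i.+1)) ->
  (forall k, 0 < k < n -> col (f k) \in D) ->
  forall i, i < n -> connect (Tadj D) (tend (stp f 0) (col (f 0))) (tend (stp f i) (col (f i))).
Proof.
move=> hf hD; elim=> [|i IH] hi; first exact: connect0.
apply: connect_trans (IH (ltnW hi)) _.
rewrite (st_tend (step (hf i (ltnW hi)))); apply: ends; apply: hD.
by rewrite hi.
Qed.

Lemma star_inj n : forall f, (forall i, i < n -> R (f i) (f i.+1)) ->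
  forall b, tend b (col (f 0)) = tend b (col (f n)) -> st b (f 0) = st b (f n).
Proof.
elim/ltn_ind: n => n IH f hf b ht.
case: n IH hf ht => [|n] IH hf ht; first by [].
case: (boolP [exists i : 'I_n.+1, (0 < i) && (tend b (col (f i)) == tend b (col (f 0)))]).
  case/existsP => -[i hi] /= /andP[i0 /eqP hti].
  have h1 := IH i hi f (fun k hk => hf k (ltn_trans hk hi)) b (esym hti).
  have hf2 : forall k, k < n.+1 - i -> R (f (i + k)) (f (i + k).+1).
    by move=> k hk; apply: hf; rewrite -ltn_subRL.
  have h2 := IH (n.+1 - i) (ltac:(by rewrite ltn_subrL i0)) (fun k => f (i + k))
     (fun k hk => eq_ind _ (fun x => R (f (i + k)) (f x)) (hf2 k hk) _ (esym (addnS i k))) b.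
  rewrite addn0 subnKC ?(ltnW hi) // in h2.
  by rewrite h1 h2 // hti.
move=> noint.
have noi k : 0 < k < n.+1 -> tend b (col (f k)) != tend b (col (f 0)).
  move=> /andP[k0 kn]; apply: contraNN noint => hk; apply/existsP.
  by exists (Ordinal kn); rewrite /= k0.
have hs0 : stp f 0 = ~~ b \/ (n = 0 /\ stp f 0 = b).
  case: (boolP (stp f 0 == b)) => [/eqP hb|]; last by move=> hb; left; move: hb; case: (stp f 0); case: (b).
  right; split=> //; case: n noi hf ht IH {noint} => // n noi hf _ _.
  have := step (hf 0 erefl); rewrite hb => /st_tend h.
  by have := noi 1 erefl; rewrite h eqxx.
case: hs0 => [hs0|[n0 hb]]; last first.
  by subst n; have := step (hf 0 erefl); rewrite hb.
have hsn : stp f n = ~~ b.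
  case: (boolP (stp f n == b)) => [/eqP hb|]; last by case: (stp f n); case: (b).
  have := step (hf n (ltnSn n)); rewrite hb => /st_tend h.
  case: n noi hf ht IH hs0 {noint} hb h => [|n] noi hf ht IH hs0 hb h.
    by move: hs0; rewrite hb; case: (b).
  by have := noi n.+1 (ltnSn _); rewrite h ht eqxx.
have [hc|hc] := eqVneq (col (f 0)) (col (f n.+1)).
  have e0 := step (hf 0 erefl); rewrite hs0 in e0.
  have en := step (hf n (ltnSn n)); rewrite hsn in en.
  suff hh : st (~~ b) (f 0) = st (~~ b) (f n.+1) by rewrite (F1 hh hc).
  case: n noi hf ht IH hs0 hsn hc e0 en {noint} => [|n] noi hf ht IH hs0 hsn hc e0 en.
    exact: e0.
  have hin := IH n (ltnW (ltnSn n.+1)) (fun k => f k.+1) (fun k hk => hf k.+1 (ltnW hk)) (~~ b).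
  rewrite e0 -en hin //.
  by rewrite -(st_tend e0) (st_tend en) hc.
exfalso.
have hD : forall k, 0 < k < n.+1 -> col (f k) \in setT :\ col (f 0).
  move=> k hk; rewrite !inE andbT; apply: contraNN (noi k hk) => /eqP ->.
  by rewrite eqxx.
have hch := chain hf hD (ltnSn n).
rewrite hs0 (st_tend (step (hf n (ltnSn n)))) hsn in hch.
have hcn : col (f n.+1) \in setT :\ col (f 0) by rewrite !inE eq_sym hc.
have := connect_trans hch (ends (~~ b) b hcn); rewrite -ht.
by have := acyc (col (f 0)) (~~ b); rewrite negbK => /negP.
Qed.

Lemma stR b e e' : st b e = st b e' -> R e e'.
Proof. by case: b => h; rewrite /R h eqxx ?orbT. Qed.

Lemma R_sym : symmetric R.
Proof. by move=> x y; rewrite /R (eq_sym (st true x)) (eq_sym (st false x)). Qed.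

Lemma uniq_class e e' : connect R e e' -> col e = col e' -> e = e'.
Proof.
case/connectP => p hp -> hc.
pose f i := nth e (e :: p) i.
have hf : forall i, i < size p -> R (f i) (f i.+1) by move=> i hi; exact: (pathP e hp) i hi.
have hl : f (size p) = last e p by rewrite /f -[size p]/((size (e :: p)).-1) nth_last.
have := star_inj hf (b := true); rewrite hl /= => h.
by apply: (F1 (b := true)) => //; apply: h; rewrite hc.
Qed.

Lemma exist_col e0 i : exists e, connect R e0 e /\ col e = i.
Proof.
case: hT => hcon _.
pose Good y := forall b j, tend b j = y -> exists e, connect R e0 e /\ col e = j.
have base : Good (tend true (col e0)).
  move=> b j hj; have hb := tend_inj hj; subst b.
  have [e' [h1 h2]] := partner hj.
  by exists e'; split=> //; apply: connect1; apply: (stR (b := true)).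
have stepG : forall y z, Good y -> Tadj setT y z -> Good z.
  move=> y z gy /existsP [c /andP [_ hc]].
  have [b' [hy hz]] : exists b', y = tend b' c /\ z = tend (~~ b') c.
    case/orP: hc => /andP[/eqP -> /eqP ->]; [by exists true | by exists false].
  move=> b j hj.
  have [e [he hce]] := gy b' c (esym hy).
  have hb : b = ~~ b' by apply: (tend_inj (c := j) (c' := c)); rewrite hj hz.
  subst b.
  have [e' [h1 h2]] := partner (b := ~~ b') (e := e) (k := j) ltac:(by rewrite hj hz hce).
  exists e'; split=> //; apply: connect_trans he (connect1 _).
  by apply: stR (esym h1).
have key : forall p y, path (Tadj setT) y p -> Good y -> Good (last y p).
  elim=> [|z p IH] y //= /andP[hyz hp] gy; exact: IH hp (stepG _ _ gy hyz).
have := hcon (tend true (col e0)) (tend true i).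
case/connectP => p hp hl.
by apply: (key p _ hp base true); rewrite -hl.
Qed.

Lemma decomp : Tstar_decomposition ta tb ea eb.
Proof.
exists (equivalence_partition (connect R) setT); split.
  apply: equivalence_partitionP => x y z _ _ _; split; first exact: connect0.
  move=> hxy; apply/idP/idP => h; first by apply: connect_trans _ h;
    rewrite (sym_connect_sym R_sym).
  exact: connect_trans hxy h.
move=> S /imsetP [e0 _ ->].
pose phi i := odflt e0 [pick e | connect R e0 e && (col e == i)].
have hphi : forall i, connect R e0 (phi i) /\ col (phi i) = i.
  move=> i; rewrite /phi; case: pickP => [e /andP[h1 /eqP h2] //|none].
  have [e [h1 h2]] := exist_col e0 i.
  by have := none e; rewrite h1 h2 eqxx.
have uniqS : forall e e', connect R e0 e -> connect R e0 e' -> col e = col e' -> e = e'.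
  move=> e e' h1 h2 hc; apply: uniq_class hc; apply: connect_trans h2.
  by rewrite (sym_connect_sym R_sym).
have same : forall b i i', tend b i' = tend b i -> st b (phi i') = st b (phi i).
  move=> b i i' hi.
  have [e' [h1 h2]] := partner (b := b) (e := phi i) (k := i') ltac:(by rewrite (hphi i).2).
  have -> : phi i' = e'; last by [].
  apply: uniqS; first exact: (hphi i').1.
    apply: connect_trans (hphi i).1 (connect1 _); exact: stR (esym h1).
  by rewrite h2 (hphi i').2.
pose f (x : TA + TB) : VA + VB := match x with
  | inl t => if [pick i | ta i == t] is Some i then inl (ea (phi i)) else inl (ea e0)
  | inr t => if [pick i | tb i == t] is Some i then inr (eb (phi i)) else inr (eb e0) end.
exists phi, f; split.
- by move=> i j h; rewrite -(hphi i).2 h (hphi j).2.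
- apply/setP => e; rewrite !inE; apply/imsetP/idP => [[i _ ->]|h]; first exact: (hphi i).1.
  exists (col e) => //; apply: uniqS h (hphi _).1 _; by rewrite (hphi _).2.
- move=> i; left; rewrite /f; split.
    case: pickP => [i' /eqP hi'|none]; last by have := none i; rewrite eqxx.
    have := same true i i' ltac:(by rewrite /= hi').
    by move/(congr1 (fun x => x.1.1)).
  case: pickP => [i' /eqP hi'|none]; last by have := none i; rewrite eqxx.
  have := same false i i' ltac:(by rewrite /= hi').
  by move/(congr1 (fun x => x.1.1)).
Qed.

End Proof.

Theorem lemma12 (TA TB : finType) (m : nat) (ta : 'I_m -> TA) (tb : 'I_m -> TB)
  (hT : is_tree ta tb) (hleaf : exists y : TB, is_leaf ta tb (inr y))
  (VA VB E : finType) (ea : E -> VA) (eb : E -> VB)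
  (hcol : exists col : E -> 'I_m, T_equitable ta tb ea eb col) :
  Tstar_decomposition ta tb ea eb.
Proof.
by case: hcol => col hc; exact: (decomp hT hc).
Qed.
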